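(* Let $\mathcal{R}^{rsc}$ be a rich single-crossing domain of classical preferences on $\mathbb{Z}$, ordered by $\prec$. Then $(\mathcal{R}^{rsc},\prec)$ is a linear continuum, i.e. $\prec$ is a simple (linear) order, every nonempty subset of $\mathcal{R}^{rsc}$ that is bounded above (w.r.t. $\prec$) has a least upper bound in $\mathcal{R}^{rsc}$, and whenever $R'\prec R''$ there is $R\in\mathcal{R}^{rsc}$ with $R'\prec R\prec R''$. Moreover there is an order-preserving homeomorphism $h$ between $\mathcal{R}^{rsc}$ with the order topology and an open interval of $\mathbb{R}$ (hence $\mathbb{R}$) with the Euclidean topology; in particular the order topology on $\mathcal{R}^{rsc}$ is metrizable.
   Context: Let $\mathbb{Z}=[0,\infty)\times[0,1]$, with elements $(t,q)$ ($t$ a payment, $q$ a share or winning probability). For $x'=(t',q'),x''=(t'',q'')$ write $x'<x''$ if $t'<t''$ and $q'<q''$, and $x'\le x''$ if $x'=x''$ or $x'<x''$. A preference is a complete transitive binary relation $R$ on $\mathbb{Z}$ with strict part $P$ and indifference $I$ (decorations on $R$ carry over to $P,I$). Let $UC(R,z)=\{x:xRz\}$, $LC(R,z)=\{x:zRx\}$, $IC(R,z)=\{x:xIz\}$. $R$ is classical if: for all $q$, $t''>t'$ implies $(t',q)P(t'',q)$; for all $t$, $q''>q'$ implies $(t,q'')P(t,q')$; and $UC(R,z),LC(R,z)$ are closed in $\mathbb{Z}$ for every $z$. Two distinct classical preferences $R',R''$ satisfy the single-crossing property if for all $x,y\in\mathbb{Z}$ the set $IC(R',x)\cap IC(R'',y)$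 has at most one element. A rich single-crossing domain $\mathcal{R}^{rsc}$ is a set of classical preferences any two distinct members of which satisfy the single-crossing property, and such that for all $x'<x''$ there is $R\in\mathcal{R}^{rsc}$ with $x'Ix''$. For $z\in\mathbb{Z}$ let $\square(z)=\{x\in\mathbb{Z}:x\le z\}$; $R''$ cuts $R'$ from above at $z$ if $\square(z)\cap UC(R'',z)\subseteq\square(z)\cap UC(R',z)$. It is a known fact that for distinct $R',R''\in\mathcal{R}^{rsc}$, if $R''$ cuts $R'$ from above at some bundle $(t,q)$ with $t>0,q>0$, then it does so at every bundle. For distinct $R',R''\in\mathcal{R}^{rsc}$ write $R'\prec R''$ if $R''$ cuts $R'$ from above at every $z\in\mathbb{Z}$. The order topology on $\mathcal{R}^{rsc}$ is generated by the open intervals $]R',R''[=\{R:R'\prec R\prec R''\}$ together with the open rays. *)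

(* Defs.v *)
From Stdlib Require Import Reals.
From Coquelicot Require Import Rbar.
Open Scope R_scope.

Definition inZ (z : R * R) : Prop := 0 <= fst z /\ 0 <= snd z <= 1.
Definition Zt : Type := { z : R * R | inZ z }.
Definition pay (x : Zt) : R := fst (proj1_sig x).
Definition shr (x : Zt) : R := snd (proj1_sig x).

Definition zlt (x y : Zt) : Prop := pay x < pay y /\ shr x < shr y.
Definition zle (x y : Zt) : Prop := x = y \/ zlt x y.

Definition Pref : Type := Zt -> Zt -> Prop.
Definition strictP (Rl : Pref) (x y : Zt) : Prop := Rl x y /\ ~ Rl y x.
Definition indiff (Rl : Pref) (x y : Zt) : Prop := Rl x y /\ Rl y x.

Definition is_preference (Rl : Pref) : Prop :=
  (forall x y, Rl x y \/ Rl y x) /\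
  (forall x y z, Rl x y -> Rl y z -> Rl x z).

Definition zdist (x y : Zt) : R :=
  sqrt ((pay x - pay y) ^ 2 + (shr x - shr y) ^ 2).
Definition closedZ (A : Zt -> Prop) : Prop :=
  forall z, (forall eps, 0 < eps -> exists x, A x /\ zdist z x < eps) -> A z.

Definition UC (Rl : Pref) (z : Zt) : Zt -> Prop := fun x => Rl x z.
Definition LC (Rl : Pref) (z : Zt) : Zt -> Prop := fun x => Rl z x.
Definition IC (Rl : Pref) (z : Zt) : Zt -> Prop := fun x => indiff Rl x z.

Definition classical (Rl : Pref) : Prop :=
  is_preference Rl /\
  (forall x y : Zt, shr x = shr y -> pay x < pay y -> strictP Rl x y) /\
  (forall x y : Zt, pay x = pay y -> shr x < shr y -> strictP Rl y x) /\
  (forall z, closedZ (UC Rl z) /\ closedZ (LC Rl z)).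

Definition single_crossing (R1 R2 : Pref) : Prop :=
  forall x y a b : Zt, IC R1 x a -> IC R2 y a -> IC R1 x b -> IC R2 y b -> a = b.

Definition Domain : Type := Pref -> Prop.

Definition rich_single_crossing (D : Domain) : Prop :=
  (forall Rl, D Rl -> classical Rl) /\
  (forall R1 R2, D R1 -> D R2 -> R1 <> R2 -> single_crossing R1 R2) /\
  (forall x1 x2 : Zt, zlt x1 x2 -> exists Rl, D Rl /\ indiff Rl x1 x2).

Definition cuts_from_above (R2 R1 : Pref) (z : Zt) : Prop :=
  forall x, zle x z -> UC R2 z x -> UC R1 z x.

Definition prec (R1 R2 : Pref) : Prop :=
  R1 <> R2 /\ forall z, cuts_from_above R2 R1 z.
Definition preceq (R1 R2 : Pref) : Prop := R1 = R2 \/ prec R1 R2.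

Definition simple_order (D : Domain) : Prop :=
  (forall Rl, D Rl -> ~ prec Rl Rl) /\
  (forall R1 R2 R3, D R1 -> D R2 -> D R3 -> prec R1 R2 -> prec R2 R3 -> prec R1 R3) /\
  (forall R1 R2, D R1 -> D R2 -> R1 <> R2 -> prec R1 R2 \/ prec R2 R1).

Definition upper_bound (D S : Domain) (u : Pref) : Prop :=
  D u /\ forall s, S s -> preceq s u.

Definition lub_property (D : Domain) : Prop :=
  forall S : Domain, (forall s, S s -> D s) -> (exists s, S s) ->
    (exists u, upper_bound D S u) ->
    exists l, upper_bound D S l /\ forall u, upper_bound D S u -> preceq l u.

Definition dense_order (D : Domain) : Prop :=
  forall R1 R2, D R1 -> D R2 -> prec R1 R2 -> exists Rl, D Rl /\ prec R1 Rl /\ prec Rl R2.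

Definition linear_continuum (D : Domain) : Prop :=
  simple_order D /\ lub_property D /\ dense_order D.

Definition basic_open (D : Domain) (B : Domain) : Prop :=
  (B = D) \/
  (exists a b, D a /\ D b /\ B = (fun Rl => D Rl /\ prec a Rl /\ prec Rl b)) \/
  (exists a, D a /\ B = (fun Rl => D Rl /\ prec a Rl)) \/
  (exists b, D b /\ B = (fun Rl => D Rl /\ prec Rl b)).

Definition order_open (D : Domain) (U : Domain) : Prop :=
  (forall Rl, U Rl -> D Rl) /\
  forall Rl, U Rl -> exists B, basic_open D B /\ B Rl /\ forall Q, B Q -> U Q.

Definition in_interval (a b : Rbar) (y : R) : Prop := Rbar_lt a y /\ Rbar_lt y b.

Definition euclid_open_in (a b : Rbar) (V : R -> Prop) : Prop :=
  (forall y, V y -> in_interval a b y) /\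
  forall y, V y -> exists eps, 0 < eps /\
     forall y', in_interval a b y' -> Rabs (y' - y) < eps -> V y'.

Definition order_homeomorphism (D : Domain) (h : Pref -> R) (a b : Rbar) : Prop :=
  (forall Rl, D Rl -> in_interval a b (h Rl)) /\
  (forall R1 R2, D R1 -> D R2 -> h R1 = h R2 -> R1 = R2) /\
  (forall y, in_interval a b y -> exists Rl, D Rl /\ h Rl = y) /\
  (forall R1 R2, D R1 -> D R2 -> prec R1 R2 -> h R1 < h R2) /\
  (forall V, euclid_open_in a b V -> order_open D (fun Rl => D Rl /\ V (h Rl))) /\
  (forall U, order_open D U -> euclid_open_in a b (fun y => exists Rl, U Rl /\ h Rl = y)).

Definition is_metric_on (D : Domain) (d : Pref -> Pref -> R) : Prop :=
  (forall x y, D x -> D y -> 0 <= d x y) /\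
  (forall x y, D x -> D y -> (d x y = 0 <-> x = y)) /\
  (forall x y, D x -> D y -> d x y = d y x) /\
  (forall x y z, D x -> D y -> D z -> d x z <= d x y + d y z).

Definition metric_open (D : Domain) (d : Pref -> Pref -> R) (U : Domain) : Prop :=
  (forall Rl, U Rl -> D Rl) /\
  forall Rl, U Rl -> exists eps, 0 < eps /\ forall Q, D Q -> d Rl Q < eps -> U Q.

Definition order_topology_metrizable (D : Domain) : Prop :=
  exists d, is_metric_on D d /\ forall U, order_open D U <-> metric_open D d U.

(* Main.v *)
Require Import Defs.
From Stdlib Require Import Reals Lra ClassicalEpsilon ProofIrrelevance Classical.
From Coquelicot Require Import Rbar.
Open Scope R_scope.

Lemma inZ0 : inZ (0,0). Proof. unfold inZ; simpl; lra. Qed.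
Definition zbase : Zt := exist _ (0,0) inZ0.
Definition mk (t q : R) : Zt :=
  match excluded_middle_informative (inZ (t,q)) with
  | left H => exist _ (t,q) H
  | right _ => zbase end.

Lemma mk_pay t q : 0 <= t -> 0 <= q <= 1 -> pay (mk t q) = t.
Proof. intros H1 H2. unfold mk. destruct excluded_middle_informative as [H|H]; [reflexivity|].
 exfalso; apply H; unfold inZ; simpl; lra. Qed.
Lemma mk_shr t q : 0 <= t -> 0 <= q <= 1 -> shr (mk t q) = q.
Proof. intros H1 H2. unfold mk. destruct excluded_middle_informative as [H|H]; [reflexivity|].
 exfalso; apply H; unfold inZ; simpl; lra. Qed.

Lemma Zt_eq (a b : Zt) : pay a = pay b -> shr a = shr b -> a = b.
Proof. destruct a as [[ta qa] Ha], b as [[tb qb] Hb]; unfold pay, shr; simpl.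
 intros -> ->. f_equal. apply proof_irrelevance. Qed.

Lemma Zt_bounds (a : Zt) : 0 <= pay a /\ 0 <= shr a <= 1.
Proof. destruct a as [[t q] H]; unfold pay, shr, inZ in *; simpl in *; exact H. Qed.

Definition near (a b : Zt) (e : R) := Rabs (pay a - pay b) < e /\ Rabs (shr a - shr b) < e.

Lemma zdist_lt x y e : 0 < e -> near x y (e/2) -> zdist x y < e.
Proof. intros He [H1 H2]. unfold zdist.
 rewrite <- (sqrt_pow2 e) by lra. apply sqrt_lt_1_alt. split.
 - pose proof (pow2_ge_0 (pay x - pay y)); pose proof (pow2_ge_0 (shr x - shr y)); lra.
 - set (a := pay x - pay y) in *. set (b := shr x - shr y) in *.
   assert (a^2 = Rabs a ^2) by (unfold Rabs; destruct Rcase_abs; ring).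
   assert (b^2 = Rabs b ^2) by (unfold Rabs; destruct Rcase_abs; ring).
   pose proof (Rabs_pos a). pose proof (Rabs_pos b). nra.
Qed.

Lemma near_sym a b e : near a b e -> near b a e.
Proof. unfold near; rewrite !(Rabs_minus_sym (pay b)), !(Rabs_minus_sym (shr b)); auto. Qed.

Lemma open_compl (A : Zt -> Prop) z : closedZ A -> ~ A z ->
  exists e, 0 < e /\ forall x, near x z e -> ~ A x.
Proof. intros HA Hz. apply NNPP; intro Hn. apply Hz, HA. intros eps Heps.
 apply NNPP; intro Hm. apply Hn. exists (eps/2). split; [lra|].
 intros x Hx Ax. apply Hm. exists x. split; auto. apply zdist_lt; auto.
 apply near_sym. destruct Hx; split; lra. Qed.

Section Pref.
Variable Rl : Pref.
Hypothesis HR : classical Rl.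

Lemma refl x : Rl x x.
Proof. destruct HR as [[Hc _] _]. destruct (Hc x x); auto. Qed.
Lemma compl x y : ~ Rl x y -> Rl y x.
Proof. destruct HR as [[Hc _] _]. destruct (Hc x y); tauto. Qed.
Lemma trans x y z : Rl x y -> Rl y z -> Rl x z.
Proof. destruct HR as [[_ Ht] _]. eauto. Qed.
Lemma sP_trans x y z : strictP Rl x y -> strictP Rl y z -> strictP Rl x z.
Proof. intros [a b] [c d]. split. eapply trans; eauto. intro. apply d. eapply trans; eauto. Qed.
Lemma sP_R_trans x y z : strictP Rl x y -> Rl y z -> strictP Rl x z.
Proof. intros [a b] c. split. eapply trans; eauto. intro. apply b. eapply trans; eauto. Qed.
Lemma R_sP_trans x y z : Rl x y -> strictP Rl y z -> strictP Rl x z.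
Proof. intros a [c d]. split. eapply trans; eauto. intro. apply d. eapply trans; eauto. Qed.
Lemma mono_t x y : shr x = shr y -> pay x < pay y -> strictP Rl x y.
Proof. destruct HR as [_ [H _]]. auto. Qed.
Lemma mono_q x y : pay x = pay y -> shr x < shr y -> strictP Rl y x.
Proof. destruct HR as [_ [_ [H _]]]. auto. Qed.
Lemma UC_closed z : closedZ (UC Rl z). Proof. destruct HR as [_ [_ [_ H]]]. apply H. Qed.
Lemma LC_closed z : closedZ (LC Rl z). Proof. destruct HR as [_ [_ [_ H]]]. apply H. Qed.

Lemma strict_open a b : strictP Rl a b ->
  exists e, 0 < e /\ forall a' b', near a' a e -> near b' b e -> strictP Rl a' b'.
Proof. intros [Hab Hba].
 destruct (open_compl _ _ (LC_closed b) Hba) as [e1 [He1 H1]].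
 set (w := mk (pay a + e1/2) (shr a)).
 destruct (Zt_bounds a) as [Ha1 Ha2].
 assert (Pw : pay w = pay a + e1/2) by (apply mk_pay; lra).
 assert (Sw : shr w = shr a) by (apply mk_shr; lra).
 assert (Hwb : strictP Rl w b).
 { assert (~ Rl b w). { apply H1. unfold near. rewrite Pw, Sw.
     replace (pay a + e1/2 - pay a) with (e1/2) by ring. replace (shr a - shr a) with 0 by ring.
     rewrite Rabs_R0, Rabs_pos_eq by lra. split; lra. }
   split; auto. apply compl; auto. }
 assert (Haw : strictP Rl a w) by (apply mono_t; rewrite ?Pw, ?Sw; lra).
 destruct (open_compl _ _ (LC_closed w) (proj2 Haw)) as [e2 [He2 H2]].
 destruct (open_compl _ _ (UC_closed w) (proj2 Hwb)) as [e3 [He3 H3]].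
 exists (Rmin e2 e3). split. apply Rmin_glb_lt; auto.
 intros a' b' Ha' Hb'.
 assert (near a' a e2) by (destruct Ha'; split; eapply Rlt_le_trans; eauto; apply Rmin_l).
 assert (near b' b e3) by (destruct Hb'; split; eapply Rlt_le_trans; eauto; apply Rmin_r).
 assert (strictP Rl a' w) by (split; [apply compl; apply H2; auto| apply H2; auto]).
 assert (strictP Rl w b') by (split; [apply compl; apply H3; auto| apply H3; auto]).
 eapply sP_trans; eauto.
Qed.
End Pref.

Record Par := mkPar { tz : R; qz : R; kt : R; kq : R }.
Definition valid p := (0 <= kt p < tz p) /\ (0 <= kq p /\ kq p < qz p /\ qz p <= 1).
Definition ptt p s := kt p + Rmax 0 (-s) * (tz p - kt p).
Definition ptq p s := kq p + Rmax 0 s * (qz p - kq p).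
Definition Pp p s := mk (ptt p s) (ptq p s).
Definition Zp p := mk (tz p) (qz p).

Lemma rm s : (0 <= s /\ Rmax 0 (-s) = 0 /\ Rmax 0 s = s) \/ (s <= 0 /\ Rmax 0 (-s) = -s /\ Rmax 0 s = 0).
Proof. destruct (Rle_dec 0 s).
 - left. rewrite Rmax_left by lra. rewrite Rmax_right by lra. auto.
 - right. rewrite Rmax_right by lra. rewrite Rmax_left by lra. split; [lra|auto]. Qed.

Section Path.
Variable p : Par.
Hypothesis Hp : valid p.

Lemma ptt_b s : -1 <= s <= 1 -> kt p <= ptt p s <= tz p.
Proof. destruct Hp. unfold ptt. destruct (rm s) as [[? [-> _]]|[? [-> _]]]; intros; nra. Qed.
Lemma ptq_b s : -1 <= s <= 1 -> kq p <= ptq p s <= qz p.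
Proof. destruct Hp. unfold ptq. destruct (rm s) as [[? [_ ->]]|[? [_ ->]]]; intros; nra. Qed.
Lemma P_pay s : -1 <= s <= 1 -> pay (Pp p s) = ptt p s.
Proof. intros; destruct Hp; pose proof (ptt_b s H); pose proof (ptq_b s H); apply mk_pay; lra. Qed.
Lemma P_shr s : -1 <= s <= 1 -> shr (Pp p s) = ptq p s.
Proof. intros; destruct Hp; pose proof (ptt_b s H); pose proof (ptq_b s H); apply mk_shr; lra. Qed.
Lemma Z_pay : pay (Zp p) = tz p. Proof. destruct Hp; apply mk_pay; lra. Qed.
Lemma Z_shr : shr (Zp p) = qz p. Proof. destruct Hp; apply mk_shr; lra. Qed.

Lemma P_inside s : -1 < s < 1 -> pay (Pp p s) < tz p /\ shr (Pp p s) < qz p.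
Proof. intros. rewrite P_pay, P_shr by lra. destruct Hp. unfold ptt, ptq.
 destruct (rm s) as [[? [-> ->]]|[? [-> ->]]]; split; nra. Qed.

Lemma P_zlt s : -1 < s < 1 -> zlt (Pp p s) (Zp p).
Proof. intros. unfold zlt. rewrite Z_pay, Z_shr. apply P_inside; auto. Qed.

Lemma P_neq s : -1 < s < 1 -> Pp p s <> Zp p.
Proof. intros H E. pose proof (P_inside s H). rewrite E, Z_pay in H0. lra. Qed.

Variable Rl : Pref.
Hypothesis HR : classical Rl.

Lemma P_mono s s' : -1 <= s -> s < s' -> s' <= 1 -> strictP Rl (Pp p s') (Pp p s).
Proof. intros. destruct Hp as [[h1 h2] [h3 [h4 h5]]].
 assert (Hc : forall a b, -1 <= a -> a < b -> b <= 0 -> strictP Rl (Pp p b) (Pp p a)).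
 { intros a b ? ? ?. apply mono_t; auto. rewrite !P_shr by lra. unfold ptq.
   rewrite (Rmax_left 0 a), (Rmax_left 0 b) by lra. ring.
   rewrite !P_pay by lra. unfold ptt. rewrite (Rmax_right 0 (-a)), (Rmax_right 0 (-b)) by lra. nra. }
 assert (Hd : forall a b, 0 <= a -> a < b -> b <= 1 -> strictP Rl (Pp p b) (Pp p a)).
 { intros a b ? ? ?. apply mono_q; auto. rewrite !P_pay by lra. unfold ptt.
   rewrite (Rmax_left 0 (-a)), (Rmax_left 0 (-b)) by lra. ring.
   rewrite !P_shr by lra. unfold ptq. rewrite (Rmax_right 0 a), (Rmax_right 0 b) by lra. nra. }
 destruct (Rle_dec s' 0). apply Hc; lra.
 destruct (Rle_dec 0 s). apply Hd; lra.
 apply sP_trans with (Pp p 0); auto. apply Hd; lra. apply Hc; lra.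
Qed.

Lemma P_lo : strictP Rl (Zp p) (Pp p (-1)).
Proof. destruct Hp as [[h1 h2] [h3 [h4 h5]]]. apply mono_q; auto.
 rewrite P_pay, Z_pay by lra. unfold ptt. rewrite Rmax_right by lra. ring.
 rewrite P_shr, Z_shr by lra. unfold ptq. rewrite Rmax_left by lra. lra. Qed.
Lemma P_hi : strictP Rl (Pp p 1) (Zp p).
Proof. destruct Hp as [[h1 h2] [h3 [h4 h5]]]. apply mono_t; auto.
 rewrite P_shr, Z_shr by lra. unfold ptq. rewrite Rmax_right by lra. ring.
 rewrite P_pay, Z_pay by lra. unfold ptt. rewrite Rmax_left by lra. lra. Qed.

Lemma Rmax_lip a b : Rabs (Rmax 0 a - Rmax 0 b) <= Rabs (a - b).
Proof. unfold Rmax; destruct Rle_dec; destruct Rle_dec; split_Rabs; lra. Qed.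

Definition K := 1 + tz p + qz p.
Lemma K_pos : 0 < K. Proof. unfold K; destruct Hp; lra. Qed.

Lemma P_near s s' d : -1 <= s <= 1 -> -1 <= s' <= 1 -> 0 < d -> Rabs (s' - s) < d ->
  near (Pp p s') (Pp p s) (d * K).
Proof. intros. destruct Hp as [[h1 h2] [h3 [h4 h5]]]. unfold near, K.
 rewrite !P_pay, !P_shr by lra. unfold ptt, ptq.
 pose proof (Rmax_lip (-s') (-s)). pose proof (Rmax_lip s' s).
 replace (-s' - - s) with (-(s'-s)) in H3 by ring. rewrite Rabs_Ropp in H3.
 replace (kt p + Rmax 0 (- s') * (tz p - kt p) - (kt p + Rmax 0 (- s) * (tz p - kt p)))
  with ((Rmax 0 (- s') - Rmax 0 (-s)) * (tz p - kt p)) by ring.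
 replace (kq p + Rmax 0 s' * (qz p - kq p) - (kq p + Rmax 0 s * (qz p - kq p)))
  with ((Rmax 0 s' - Rmax 0 s) * (qz p - kq p)) by ring.
 rewrite !Rabs_mult, (Rabs_pos_eq (tz p - kt p)), (Rabs_pos_eq (qz p - kq p)) by lra.
 pose proof (Rabs_pos (Rmax 0 (-s') - Rmax 0 (-s))). pose proof (Rabs_pos (Rmax 0 s' - Rmax 0 s)).
 split; nra.
Qed.

Lemma lub_approx (E : R -> Prop) m : is_lub E m -> forall d, 0 < d -> exists s, E s /\ m - d < s <= m.
Proof. intros [Hu Hl] d Hd. apply NNPP; intro N.
 assert (m <= m - d); [|lra]. apply Hl. intros x Ex. apply Rnot_lt_le. intro. apply N.
 exists x. split; auto. Qed.

Lemma thresh : exists s, -1 < s < 1 /\ indiff Rl (Pp p s) (Zp p).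
Proof.
 set (E := fun s => -1 <= s <= 1 /\ Rl (Zp p) (Pp p s)).
 assert (Eb : bound E) by (exists 1; intros x [Hx _]; lra).
 assert (Ee : exists x, E x) by (exists (-1); split; [lra| exact (proj1 (P_lo))]).
 destruct (completeness E Eb Ee) as [m Hm].
 assert (Hm1 : -1 <= m) by (apply (proj1 Hm); split; [lra|exact (proj1 P_lo)]).
 assert (Hm2 : m <= 1) by (apply (proj2 Hm); intros x [Hx _]; lra).
 pose proof K_pos as HK.
 assert (A : Rl (Zp p) (Pp p m)).
 { apply (LC_closed Rl HR (Zp p) (Pp p m)). intros eps He.
   assert (Hd: 0 < eps/(2*K)) by (apply Rdiv_lt_0_compat; lra).
   destruct (lub_approx E m Hm (eps/(2*K)) Hd) as [s [[Es1 Es2] Es3]].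
   exists (Pp p s). split; auto. apply zdist_lt; auto. apply near_sym.
   replace (eps/2) with ((eps/(2*K))*K) by (field; lra). apply P_near; try lra.
   rewrite Rabs_left1 by lra. lra. }
 assert (B : Rl (Pp p m) (Zp p)).
 { destruct (Req_dec m 1) as [->|Hne]. exact (proj1 P_hi).
   apply (UC_closed Rl HR (Zp p) (Pp p m)). intros eps He.
   set (d := Rmin (eps/(2*K)) (1 - m)).
   assert (Hd : 0 < d) by (apply Rmin_glb_lt; [apply Rdiv_lt_0_compat|]; lra).
   assert (Hd1 : d <= eps/(2*K)) by apply Rmin_l. assert (Hd2 : d <= 1 - m) by apply Rmin_r.
   exists (Pp p (m + d/2)). split.
   - apply (compl Rl HR). intro C. assert (m + d/2 <= m); [|lra]. apply (proj1 Hm). split; [lra|auto].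
   - apply zdist_lt; auto. apply near_sym.
     assert (Hn : near (Pp p (m + d / 2)) (Pp p m) (d * K)).
     { apply P_near; try lra. replace (m + d/2 - m) with (d/2) by ring. rewrite Rabs_pos_eq by lra. lra. }
     assert (d * K <= eps/2).
     { replace (eps/2) with ((eps/(2*K))*K) by (field; lra). apply Rmult_le_compat_r; lra. }
     destruct Hn; split; lra. }
 exists m. split; [split|split; auto].
 - destruct (Req_dec m (-1)) as [E1|]; [|lra]. rewrite E1 in B. exfalso. apply (proj2 P_lo); auto.
 - destruct (Req_dec m 1) as [E1|]; [|lra]. rewrite E1 in A. exfalso. apply (proj2 P_hi); auto.
Qed.

Lemma thresh_char s0 : -1 < s0 < 1 -> indiff Rl (Pp p s0) (Zp p) ->
  forall s, -1 <= s <= 1 -> (Rl (Pp p s) (Zp p) <-> s0 <= s).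
Proof. intros H0 [I1 I2] s Hs. split.
 - intro Hr. apply Rnot_lt_le. intro. destruct (P_mono s s0) as [_ N]; try lra.
   apply N. eapply trans; eauto.
 - intro. destruct (Req_dec s s0) as [->|]. auto.
   apply (proj1 (sP_R_trans Rl HR _ _ _ (P_mono s0 s ltac:(lra) ltac:(lra) ltac:(lra)) I1)).
Qed.

Lemma thresh_uniq s0 s1 : -1 < s0 < 1 -> -1 < s1 < 1 -> indiff Rl (Pp p s0) (Zp p) ->
  indiff Rl (Pp p s1) (Zp p) -> s0 = s1.
Proof. intros. pose proof (proj1 (thresh_char s0 H H1 s1 ltac:(lra)) (proj1 H2)).
 pose proof (proj1 (thresh_char s1 H0 H2 s0 ltac:(lra)) (proj1 H1)). lra. Qed.
End Path.

Definition Cut (A B : Pref) p := forall s, -1 < s < 1 -> B (Pp p s) (Zp p) -> A (Pp p s) (Zp p).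

Lemma cut_total A B p : classical A -> classical B -> valid p -> Cut A B p \/ Cut B A p.
Proof. intros HA HB Hp.
 destruct (thresh p Hp A HA) as [sa [Ha Ia]]. destruct (thresh p Hp B HB) as [sb [Hb Ib]].
 destruct (Rle_dec sa sb).
 - left. intros s Hs Hr. apply (thresh_char p Hp A HA sa Ha Ia s ltac:(lra)).
   pose proof (proj1 (thresh_char p Hp B HB sb Hb Ib s ltac:(lra)) Hr). lra.
 - right. intros s Hs Hr. apply (thresh_char p Hp B HB sb Hb Ib s ltac:(lra)).
   pose proof (proj1 (thresh_char p Hp A HA sa Ha Ia s ltac:(lra)) Hr). lra.
Qed.

Lemma sc_common A B x z : classical A -> classical B -> single_crossing A B ->
  indiff A x z -> indiff B x z -> x = z.
Proof. intros HA HB Hsc Ia Ib. apply (Hsc z z x z); auto.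
 split; apply refl; auto. split; apply refl; auto. Qed.

Lemma cut_excl A B p : classical A -> classical B -> single_crossing A B -> valid p ->
  Cut A B p -> Cut B A p -> False.
Proof. intros HA HB Hsc Hp C1 C2.
 destruct (thresh p Hp A HA) as [sa [Ha Ia]]. destruct (thresh p Hp B HB) as [sb [Hb Ib]].
 pose proof (proj1 (thresh_char p Hp B HB sb Hb Ib sa ltac:(lra)) (C2 sa Ha (proj1 Ia))).
 pose proof (proj1 (thresh_char p Hp A HA sa Ha Ia sb ltac:(lra)) (C1 sb Hb (proj1 Ib))).
 assert (sa = sb) by lra. subst sb.
 apply (P_neq p Hp sa Ha). exact (sc_common A B _ _ HA HB Hsc Ia Ib).
Qed.

Definition seg p0 p1 l := mkPar (tz p0 + l * (tz p1 - tz p0)) (qz p0 + l * (qz p1 - qz p0))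
  (kt p0 + l * (kt p1 - kt p0)) (kq p0 + l * (kq p1 - kq p0)).

Lemma seg0 p0 p1 : seg p0 p1 0 = p0.
Proof. destruct p0; unfold seg; simpl; f_equal; ring. Qed.
Lemma seg1 p0 p1 : seg p0 p1 1 = p1.
Proof. destruct p0, p1; unfold seg; simpl; f_equal; ring. Qed.

Lemma conv_le l x0 y0 x1 y1 : 0 <= l <= 1 -> x0 <= y0 -> x1 <= y1 -> x0 + l*(x1-x0) <= y0 + l*(y1-y0).
Proof. intros. assert (0 <= (1-l)*(y0-x0)) by (apply Rmult_le_pos; lra).
 assert (0 <= l*(y1-x1)) by (apply Rmult_le_pos; lra). nra. Qed.
Lemma conv_lt l x0 y0 x1 y1 : 0 <= l <= 1 -> x0 < y0 -> x1 < y1 -> x0 + l*(x1-x0) < y0 + l*(y1-y0).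
Proof. intros. destruct (Req_dec l 0). subst; lra.
 assert (0 <= (1-l)*(y0-x0)) by (apply Rmult_le_pos; lra).
 assert (0 < l*(y1-x1)) by (apply Rmult_lt_0_compat; lra). nra. Qed.

Lemma valid_seg p0 p1 l : valid p0 -> valid p1 -> 0 <= l <= 1 -> valid (seg p0 p1 l).
Proof. unfold valid, seg; simpl. intros [[a b] [c [d e]]] [[a' b'] [c' [d' e']]] Hl.
 repeat split.
 - replace 0 with (0 + l*(0-0)) by ring. apply conv_le; auto.
 - apply conv_lt; auto.
 - replace 0 with (0 + l*(0-0)) by ring. apply conv_le; auto.
 - apply conv_lt; auto.
 - replace 1 with (1 + l*(1-1)) by ring. apply conv_le; auto.
Qed.

Definition Mc p0 p1 := 1 + Rabs (tz p1 - tz p0) + Rabs (qz p1 - qz p0) + Rabs (kt p1 - kt p0) + Rabs (kq p1 - kq p0).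
Lemma Mc_pos p0 p1 : 0 < Mc p0 p1.
Proof. unfold Mc. pose proof (Rabs_pos (tz p1 - tz p0)). pose proof (Rabs_pos (qz p1 - qz p0)).
 pose proof (Rabs_pos (kt p1 - kt p0)). pose proof (Rabs_pos (kq p1 - kq p0)). lra. Qed.

Lemma comb_bound m a b l l' : 0 <= m <= 1 ->
  Rabs ((1 - m) * ((l' - l) * a) + m * ((l' - l) * b)) <= Rabs (l' - l) * (Rabs a + Rabs b).
Proof. intros Hm. eapply Rle_trans. apply Rabs_triang. rewrite !Rabs_mult.
 rewrite (Rabs_pos_eq m), (Rabs_pos_eq (1-m)) by lra.
 pose proof (Rabs_pos (l'-l)). pose proof (Rabs_pos a). pose proof (Rabs_pos b).
 assert (0 <= m * (Rabs (l'-l) * Rabs a)) by (apply Rmult_le_pos; [lra|apply Rmult_le_pos; lra]).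
 assert (0 <= (1-m) * (Rabs (l'-l) * Rabs b)) by (apply Rmult_le_pos; [lra|apply Rmult_le_pos; lra]).
 nra. Qed.

Lemma rm_b s : -1 <= s <= 1 -> 0 <= Rmax 0 s <= 1 /\ 0 <= Rmax 0 (-s) <= 1.
Proof. intros. destruct (rm s) as [[? [-> ->]]|[? [-> ->]]]; lra. Qed.

Lemma seg_near p0 p1 l l' s d : valid p0 -> valid p1 -> 0 <= l <= 1 -> 0 <= l' <= 1 ->
  -1 <= s <= 1 -> 0 < d -> Rabs (l' - l) < d ->
  near (Pp (seg p0 p1 l') s) (Pp (seg p0 p1 l) s) (d * Mc p0 p1) /\
  near (Zp (seg p0 p1 l')) (Zp (seg p0 p1 l)) (d * Mc p0 p1).
Proof. intros H0 H1 Hl Hl' Hs Hd Hll.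
 pose proof (valid_seg p0 p1 l H0 H1 Hl). pose proof (valid_seg p0 p1 l' H0 H1 Hl').
 unfold near. rewrite !P_pay, !P_shr, !Z_pay, !Z_shr by auto.
 destruct (rm_b s Hs) as [Hm1 Hm2].
 pose proof (Rabs_pos (tz p1 - tz p0)). pose proof (Rabs_pos (qz p1 - qz p0)).
 pose proof (Rabs_pos (kt p1 - kt p0)). pose proof (Rabs_pos (kq p1 - kq p0)).
 pose proof (Rabs_pos (l' - l)).
 assert (HM : forall X, 0 <= X -> X <= Mc p0 p1 -> Rabs (l'-l) * X < d * Mc p0 p1).
 { intros X HX HXM. pose proof (Mc_pos p0 p1). nra. }
 unfold ptt, ptq, seg, Mc in *; simpl in *.
 repeat split.
 - replace (kt p0 + l' * (kt p1 - kt p0) + Rmax 0 (- s) * (tz p0 + l' * (tz p1 - tz p0) - (kt p0 + l' * (kt p1 - kt p0))) -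
   (kt p0 + l * (kt p1 - kt p0) + Rmax 0 (- s) * (tz p0 + l * (tz p1 - tz p0) - (kt p0 + l * (kt p1 - kt p0)))))
   with ((1 - Rmax 0 (-s)) * ((l' - l) * (kt p1 - kt p0)) + Rmax 0 (-s) * ((l' - l) * (tz p1 - tz p0))) by ring.
   eapply Rle_lt_trans. apply comb_bound; lra. apply HM; lra.
 - replace (kq p0 + l' * (kq p1 - kq p0) + Rmax 0 s * (qz p0 + l' * (qz p1 - qz p0) - (kq p0 + l' * (kq p1 - kq p0))) -
   (kq p0 + l * (kq p1 - kq p0) + Rmax 0 s * (qz p0 + l * (qz p1 - qz p0) - (kq p0 + l * (kq p1 - kq p0)))))
   with ((1 - Rmax 0 s) * ((l' - l) * (kq p1 - kq p0)) + Rmax 0 s * ((l' - l) * (qz p1 - qz p0))) by ring.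
   eapply Rle_lt_trans. apply comb_bound; lra. apply HM; lra.
 - replace (tz p0 + l' * (tz p1 - tz p0) - (tz p0 + l * (tz p1 - tz p0))) with ((l'-l) * (tz p1 - tz p0)) by ring.
   rewrite Rabs_mult. apply HM; lra.
 - replace (qz p0 + l' * (qz p1 - qz p0) - (qz p0 + l * (qz p1 - qz p0))) with ((l'-l) * (qz p1 - qz p0)) by ring.
   rewrite Rabs_mult. apply HM; lra.
Qed.

Definition closed01 (S : R -> Prop) := forall l, 0 <= l <= 1 ->
  (forall e, 0 < e -> exists l', 0 <= l' <= 1 /\ Rabs (l' - l) < e /\ S l') -> S l.

Lemma conn01 (S T : R -> Prop) : (forall l, 0 <= l <= 1 -> S l \/ T l) ->
  (forall l, 0 <= l <= 1 -> S l -> T l -> False) -> closed01 S -> closed01 T -> S 0 -> S 1.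
Proof. intros Hc Hx CS CT S0.
 set (E := fun x => 0 <= x <= 1 /\ forall y, 0 <= y <= x -> S y).
 assert (Eb : bound E) by (exists 1; intros x [Hx' _]; lra).
 assert (Ee : exists x, E x). { exists 0. split. lra. intros y Hy. replace y with 0 by lra. auto. }
 destruct (completeness E Eb Ee) as [m Hm].
 assert (Hm0 : 0 <= m) by (apply (proj1 Hm); destruct Ee as [x Hx0]; split; [lra|]; intros y Hy; replace y with 0 by lra; auto).
 assert (Hm1 : m <= 1) by (apply (proj2 Hm); intros x [Hx' _]; lra).
 assert (Hbelow : forall y, 0 <= y < m -> S y).
 { intros y Hy. destruct (lub_approx E m Hm (m - y) ltac:(lra)) as [x [[Ex1 Ex2] Ex3]].
   apply Ex2. lra. }
 assert (Sm : S m).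
 { destruct (Req_dec m 0) as [->|Hmz]; auto. assert (0 < m) by (destruct Hm0; auto; congruence). apply CS; [lra|]. intros e He.
   exists (Rmax 0 (m - e/2)). unfold Rmax; destruct Rle_dec.
   - split; [lra|]. split. rewrite Rabs_left1 by lra. lra. apply Hbelow. lra.
   - split; [lra|]. split. rewrite Rabs_left1 by lra. lra. apply Hbelow. lra. }
 assert (Em : forall y, 0 <= y <= m -> S y).
 { intros y Hy. destruct (Req_dec y m) as [->|]; auto. apply Hbelow; lra. }
 destruct (Req_dec m 1) as [->|Hne]. apply Em; lra.
 assert (m < 1) by (destruct Hm1; auto; congruence).
 exfalso. apply (Hx m); [lra|exact Sm|]. apply CT. lra. intros e He.
 apply NNPP; intro N.
 assert (E (Rmin 1 (m + e/2))).
 { split. split. apply Rmin_glb; lra. apply Rmin_l.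
   intros y Hy. destruct (Rle_dec y m). apply Em; lra.
   destruct (Hc y) as [|Ty]; auto. pose proof (Rmin_l 1 (m+e/2)). lra.
   exfalso. apply N. exists y. split. pose proof (Rmin_l 1 (m+e/2)). lra.
   split; auto. pose proof (Rmin_r 1 (m+e/2)). rewrite Rabs_pos_eq by lra. lra. }
 pose proof (proj1 Hm _ H0). unfold Rmin in H1. destruct Rle_dec in H1; lra.
Qed.

Section Glob.
Variables A B : Pref.
Hypothesis HA : classical A.
Hypothesis HB : classical B.
Hypothesis Hsc : single_crossing A B.
Variables p0 p1 : Par.
Hypothesis H0 : valid p0.
Hypothesis H1 : valid p1.

Lemma cut_closed (X Y : Pref) : classical X -> classical Y -> closed01 (fun l => Cut X Y (seg p0 p1 l)).
Proof. intros HX HY l Hl Happ s Hs HYs.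
 set (p := seg p0 p1 l). assert (Hp : valid p) by (apply valid_seg; auto).
 apply NNPP; intro HnX.
 assert (SX : strictP X (Zp p) (Pp p s)) by (split; [apply (compl X HX); auto| auto]).
 destruct (strict_open X HX _ _ SX) as [e1 [He1 E1]].
 pose proof (K_pos p Hp) as HK.
 set (dd := Rmin (e1 / (2 * K p)) ((1 - s)/2)).
 assert (Hdd : 0 < dd) by (apply Rmin_glb_lt; [apply Rdiv_lt_0_compat|]; lra).
 assert (Hdd1 : dd <= e1/(2*K p)) by apply Rmin_l. assert (Hdd2 : dd <= (1-s)/2) by apply Rmin_r.
 set (s' := s + dd).
 assert (Hs' : -1 < s' < 1) by (unfold s'; lra).
 assert (SX' : strictP X (Zp p) (Pp p s')).
 { apply E1. split; unfold Rminus; rewrite Rplus_opp_r, Rabs_R0; lra.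
   assert (Hn : near (Pp p s') (Pp p s) ((2*dd) * K p)).
   { apply P_near; auto; try lra. unfold s'. replace (s + dd - s) with dd by ring.
     rewrite Rabs_pos_eq; lra. }
   assert (2 * dd * K p <= e1).
   { assert (Hq : dd * K p <= e1/(2*K p) * K p) by (apply Rmult_le_compat_r; lra).
     replace (e1/(2*K p)*K p) with (e1/2) in Hq by (field; lra). lra. }
   destruct Hn; split; lra. }
 assert (SY' : strictP Y (Pp p s') (Zp p)).
 { apply sP_R_trans with (Pp p s); auto. apply P_mono; auto; unfold s'; lra. }
 destruct (strict_open Y HY _ _ SY') as [e2 [He2 E2]].
 destruct (strict_open X HX _ _ SX') as [e3 [He3 E3]].
 set (e := Rmin e2 e3). assert (He : 0 < e) by (apply Rmin_glb_lt; auto).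
 pose proof (Mc_pos p0 p1) as HM.
 destruct (Happ (e / Mc p0 p1)) as [l' [Hl' [Hll C]]]. apply Rdiv_lt_0_compat; auto.
 destruct (seg_near p0 p1 l l' s' (e / Mc p0 p1) H0 H1 Hl Hl' ltac:(lra) ltac:(apply Rdiv_lt_0_compat; auto) Hll) as [N1 N2].
 replace (e / Mc p0 p1 * Mc p0 p1) with e in N1, N2 by (field; lra). fold p in N1, N2.
 assert (e <= e2) by apply Rmin_l. assert (e <= e3) by apply Rmin_r.
 assert (strictP Y (Pp (seg p0 p1 l') s') (Zp (seg p0 p1 l'))).
 { apply E2; destruct N1, N2; split; lra. }
 assert (strictP X (Zp (seg p0 p1 l')) (Pp (seg p0 p1 l') s')).
 { apply E3; destruct N1, N2; split; lra. }
 apply (proj2 H4). apply C; auto. exact (proj1 H3).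
Qed.

Lemma cut_global : Cut A B p0 -> Cut A B p1.
Proof. intro C0. rewrite <- (seg1 p0 p1).
 apply (conn01 (fun l => Cut A B (seg p0 p1 l)) (fun l => Cut B A (seg p0 p1 l))).
 - intros l Hl. apply cut_total; auto. apply valid_seg; auto.
 - intros l Hl. apply cut_excl; auto. apply valid_seg; auto.
 - apply cut_closed; auto.
 - apply cut_closed; auto.
 - rewrite seg0; auto.
Qed.
End Glob.

Definition p0 := mkPar 1 (1/2) 0 0.
Lemma p0_valid : valid p0. Proof. unfold valid, p0; simpl; lra. Qed.

Definition hh (Rl : Pref) : R :=
  epsilon (inhabits 0) (fun s => -1 < s < 1 /\ indiff Rl (Pp p0 s) (Zp p0)).

Lemma inI y : in_interval (Finite (-1)) (Finite 1) y <-> -1 < y < 1.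
Proof. unfold in_interval; simpl; tauto. Qed.

Section Main.
Variable D : Domain.
Hypothesis HD : rich_single_crossing D.

Lemma cls Rl : D Rl -> classical Rl. Proof. destruct HD as [H _]; auto. Qed.
Lemma scD R1 R2 : D R1 -> D R2 -> R1 <> R2 -> single_crossing R1 R2.
Proof. destruct HD as [_ [H _]]; auto. Qed.

Lemma h_spec Rl : D Rl -> -1 < hh Rl < 1 /\ indiff Rl (Pp p0 (hh Rl)) (Zp p0).
Proof. intro H. unfold hh. apply epsilon_spec. apply (thresh p0 p0_valid Rl (cls Rl H)). Qed.

Lemma h_char Rl s : D Rl -> -1 <= s <= 1 -> (Rl (Pp p0 s) (Zp p0) <-> hh Rl <= s).
Proof. intros H Hs. destruct (h_spec Rl H) as [A B].
 apply (thresh_char p0 p0_valid Rl (cls Rl H) (hh Rl) A B s Hs). Qed.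

Lemma h_inj R1 R2 : D R1 -> D R2 -> hh R1 = hh R2 -> R1 = R2.
Proof. intros H1 H2 E. apply NNPP; intro N.
 destruct (h_spec R1 H1) as [A1 B1]. destruct (h_spec R2 H2) as [A2 B2].
 rewrite <- E in B2. apply (P_neq p0 p0_valid (hh R1) A1).
 exact (sc_common R1 R2 _ _ (cls R1 H1) (cls R2 H2) (scD R1 R2 H1 H2 N) B1 B2). Qed.

Lemma prec_h R1 R2 : D R1 -> D R2 -> prec R1 R2 -> hh R1 < hh R2.
Proof. intros H1 H2 [Hne Hc].
 destruct (h_spec R2 H2) as [A2 B2].
 assert (R1 (Pp p0 (hh R2)) (Zp p0)).
 { apply (Hc (Zp p0) (Pp p0 (hh R2))). right. apply P_zlt. apply p0_valid. auto. exact (proj1 B2). }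
 apply (h_char R1 _ H1) in H; [|lra].
 destruct (Req_dec (hh R1) (hh R2)); [|lra]. exfalso. apply Hne. apply h_inj; auto. Qed.

Lemma h_prec R1 R2 : D R1 -> D R2 -> hh R1 < hh R2 -> prec R1 R2.
Proof. intros H1 H2 Hlt. split.
 - intro E. subst. lra.
 - assert (C0 : Cut R1 R2 p0).
   { intros s Hs Hr. apply (h_char R1 s H1); [lra|].
     apply (h_char R2 s H2) in Hr; lra. }
   intros z x [Exz|Lxz] Hx.
   + subst. unfold UC. apply (refl R1 (cls R1 H1)).
   + assert (N : R1 <> R2) by (intro E; subst; lra).
     set (p1 := mkPar (pay z) (shr z) (pay x) (shr x)).
     destruct (Zt_bounds x) as [bx1 bx2]. destruct (Zt_bounds z) as [bz1 bz2].
     destruct Lxz as [L1 L2].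
     assert (Hp1 : valid p1) by (unfold valid, p1; simpl; lra).
     pose proof (cut_global R1 R2 (cls R1 H1) (cls R2 H2) (scD R1 R2 H1 H2 N) p0 p1 p0_valid Hp1 C0) as C1.
     assert (Ex : Pp p1 0 = x).
     { apply Zt_eq. rewrite P_pay by (auto; lra). unfold ptt, p1; simpl. rewrite Ropp_0, Rmax_left by lra. ring.
       rewrite P_shr by (auto; lra). unfold ptq, p1; simpl. rewrite Rmax_left by lra. ring. }
     assert (Ez : Zp p1 = z).
     { apply Zt_eq. rewrite Z_pay by auto. reflexivity. rewrite Z_shr by auto. reflexivity. }
     unfold UC in *. rewrite <- Ex, <- Ez. apply C1. lra. rewrite Ex, Ez. auto.
Qed.

Lemma h_surj y : -1 < y < 1 -> exists Rl, D Rl /\ hh Rl = y.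
Proof. intro Hy. destruct HD as [_ [_ Hr]].
 destruct (Hr _ _ (P_zlt p0 p0_valid y Hy)) as [Rl [HRl I]].
 exists Rl. split; auto. destruct (h_spec Rl HRl) as [A B].
 apply (thresh_uniq p0 p0_valid Rl (cls Rl HRl)); auto. Qed.

Lemma preceq_h R1 R2 : D R1 -> D R2 -> (preceq R1 R2 <-> hh R1 <= hh R2).
Proof. intros H1 H2. split.
 - intros [->|P]. lra. apply Rlt_le, prec_h; auto.
 - intro L. destruct (Req_dec (hh R1) (hh R2)). left; apply h_inj; auto.
   right; apply h_prec; auto; lra. Qed.

Lemma oo_iff U : (forall Rl, U Rl -> D Rl) ->
  (order_open D U <-> forall Rl, U Rl -> exists e, 0 < e /\ forall Q, D Q -> Rabs (hh Q - hh Rl) < e -> U Q).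
Proof. intro HU. split.
 - intros [_ Ho] Rl HRl. destruct (Ho Rl HRl) as [B [HB [BR BU]]].
   destruct HB as [->|[[a [b [Ha [Hb ->]]]]|[[a [Ha ->]]|[b [Hb ->]]]]].
   + exists 1. split. lra. intros Q HQ _. apply BU; auto.
   + destruct BR as [DR [Pa Pb]]. apply prec_h in Pa; auto. apply prec_h in Pb; auto.
     exists (Rmin (hh Rl - hh a) (hh b - hh Rl)). split. apply Rmin_glb_lt; lra.
     intros Q HQ Hd. pose proof (Rmin_l (hh Rl - hh a) (hh b - hh Rl)).
     pose proof (Rmin_r (hh Rl - hh a) (hh b - hh Rl)).
     apply BU. split; auto. split; apply h_prec; auto; split_Rabs; lra.
   + destruct BR as [DR Pa]. apply prec_h in Pa; auto.
     exists (hh Rl - hh a). split. lra.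
     intros Q HQ Hd. apply BU. split; auto. apply h_prec; auto; split_Rabs; lra.
   + destruct BR as [DR Pb]. apply prec_h in Pb; auto.
     exists (hh b - hh Rl). split. lra.
     intros Q HQ Hd. apply BU. split; auto. apply h_prec; auto; split_Rabs; lra.
 - intros Hm. split; auto. intros Rl HRl. destruct (Hm Rl HRl) as [e [He HQ]].
   pose proof (h_spec Rl (HU Rl HRl)) as [Hr _].
   set (d := Rmin e (Rmin (hh Rl + 1) (1 - hh Rl)) / 2).
   assert (Hd1 : 0 < d).
   { unfold d. assert (0 < Rmin e (Rmin (hh Rl + 1) (1 - hh Rl))); [|lra].
     apply Rmin_glb_lt; auto. apply Rmin_glb_lt; lra. }
   assert (Hd2 : d < e /\ d < hh Rl + 1 /\ d < 1 - hh Rl).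
   { unfold d. pose proof (Rmin_l e (Rmin (hh Rl + 1) (1 - hh Rl))).
     pose proof (Rmin_r e (Rmin (hh Rl + 1) (1 - hh Rl))).
     pose proof (Rmin_l (hh Rl + 1) (1 - hh Rl)). pose proof (Rmin_r (hh Rl + 1) (1 - hh Rl)).
     assert (0 < Rmin e (Rmin (hh Rl + 1) (1 - hh Rl))) by (apply Rmin_glb_lt; auto; apply Rmin_glb_lt; lra). lra. }
   destruct (h_surj (hh Rl - d)) as [a [Ha Ea]]. lra.
   destruct (h_surj (hh Rl + d)) as [b [Hb Eb]]. lra.
   exists (fun Q => D Q /\ prec a Q /\ prec Q b). split; [|split].
   + right. left. exists a, b. auto.
   + split. auto. split; apply h_prec; auto; lra.
   + intros Q [DQ [Pa Pb]]. apply prec_h in Pa; auto. apply prec_h in Pb; auto.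
     apply HQ; auto. split_Rabs; lra.
Qed.

Lemma main : linear_continuum D /\
  (exists (h : Pref -> R) (a b : Rbar), Rbar_lt a b /\ order_homeomorphism D h a b) /\
  order_topology_metrizable D.
Proof.
 split; [split; [|split]|split].
 - split; [|split].
   + intros Rl _ [N _]. apply N; auto.
   + intros R1 R2 R3 H1 H2 H3 P1 P2. apply h_prec; auto.
     apply prec_h in P1; auto. apply prec_h in P2; auto. lra.
   + intros R1 R2 H1 H2 N. destruct (Rtotal_order (hh R1) (hh R2)) as [L|[E|G]].
     left; apply h_prec; auto. exfalso; apply N, h_inj; auto. right; apply h_prec; auto.
 - intros S HS [s0 Hs0] [u [Du Hu]].
   set (E := fun y => exists s, S s /\ hh s = y).
   assert (Eb : bound E).
   { exists (hh u). intros y [s [Ss <-]]. apply (preceq_h s u); auto. }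
   assert (Ee : exists y, E y) by (exists (hh s0); exists s0; auto).
   destruct (completeness E Eb Ee) as [m [Hm1 Hm2]].
   assert (hh s0 <= m) by (apply Hm1; exists s0; auto).
   assert (m <= hh u).
   { apply Hm2. intros y [s [Ss <-]]. apply (preceq_h s u); auto. }
   pose proof (h_spec s0 (HS s0 Hs0)). pose proof (h_spec u Du).
   destruct (h_surj m) as [l [Dl El]]. lra.
   exists l. split.
   + split; auto. intros s Ss. apply preceq_h; auto. rewrite El. apply Hm1. exists s; auto.
   + intros u' [Du' Hu']. apply preceq_h; auto. rewrite El. apply Hm2.
     intros y [s [Ss <-]]. apply (preceq_h s u'); auto.
 - intros R1 R2 H1 H2 P. apply prec_h in P; auto.
   pose proof (h_spec R1 H1). pose proof (h_spec R2 H2).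
   destruct (h_surj ((hh R1 + hh R2)/2)) as [Rl [Dl El]]. lra.
   exists Rl. split; auto. split; apply h_prec; auto; lra.
 - exists hh, (Finite (-1)), (Finite 1). split. simpl; lra.
   split; [|split; [|split; [|split; [|split]]]].
   + intros Rl H. apply inI. apply h_spec; auto.
   + apply h_inj.
   + intros y Hy. apply inI in Hy. apply h_surj; auto.
   + apply prec_h.
   + intros V [HV1 HV2]. apply oo_iff. intros Rl [H _]; auto.
     intros Rl [DR VR]. destruct (HV2 _ VR) as [e [He He']].
     exists e. split; auto. intros Q DQ Hd. split; auto. apply He'; auto.
     apply inI, h_spec; auto.
   + intros U HU. assert (HUD : forall Rl, U Rl -> D Rl) by (destruct HU; auto).
     pose proof (proj1 (oo_iff U HUD) HU) as Hm. split.
     * intros y [Rl [HR <-]]. apply inI, h_spec; auto.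
     * intros y [Rl [HR <-]]. destruct (Hm Rl HR) as [e [He HQ]]. exists e. split; auto.
       intros y' Hy' Hd. apply inI in Hy'. destruct (h_surj y' Hy') as [Q [DQ EQ]].
       exists Q. split; auto. apply HQ; auto. rewrite EQ; auto.
 - exists (fun x y => Rabs (hh x - hh y)). split.
   + split; [|split; [|split]].
     * intros; apply Rabs_pos.
     * intros x y Dx Dy. split. intro E0. apply h_inj; auto. split_Rabs; lra.
       intros ->. rewrite Rminus_diag, Rabs_R0; auto.
     * intros; apply Rabs_minus_sym.
     * intros x y z _ _ _. replace (hh x - hh z) with ((hh x - hh y) + (hh y - hh z)) by ring.
       apply Rabs_triang.
   + intros U. split.
     * intros HU. assert (HUD : forall Rl, U Rl -> D Rl) by (destruct HU; auto).
       pose proof (proj1 (oo_iff U HUD) HU) as Hm. split; auto.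
       intros Rl HR. destruct (Hm Rl HR) as [e [He HQ]]. exists e. split; auto.
       intros Q DQ Hd. apply HQ; auto. rewrite Rabs_minus_sym; auto.
     * intros [HUD Hm]. apply oo_iff; auto.
       intros Rl HR. destruct (Hm Rl HR) as [e [He HQ]]. exists e. split; auto.
       intros Q DQ Hd. apply HQ; auto. rewrite Rabs_minus_sym; auto.
Qed.
End Main.

Theorem theorem1 (D : Domain) (HD : rich_single_crossing D) :
  linear_continuum D /\
  (exists (h : Pref -> R) (a b : Rbar), Rbar_lt a b /\ order_homeomorphism D h a b) /\
  order_topology_metrizable D.
Proof. exact (main D HD). Qed.
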